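(* For each natural number $n$, the restriction of the preorder $\leqslant_{\vec{|\square[n]|}}$ to the vertex set $\vec{|\mathrm{sk}_0(\square[n])|}$ equals the restriction of the preorder $\leqslant_{\vec{|\mathrm{sk}_1(\square[n])|}}$ to that same vertex set.
   Context: Streams: a circulation on a space $X$ assigns to each open $V\subset X$ a preorder $\leqslant_V$ such that for every collection $\mathcal{O}$ of open sets, $\leqslant_{\bigcup\mathcal{O}}$ is the preorder with smallest graph containing $\bigcup_{V\in\mathcal{O}}\mathrm{graph}(\leqslant_V)$; a stream is a space with a circulation, $\leqslant_X$ being the preorder on $X$ itself; stream maps are continuous maps with $f(x)\leqslant_V f(y)$ whenever $x\leqslant_{f^{-1}V}y$. The category of streams is cocomplete with colimits computed on underlying spaces (final circulation). $\square$ is the smallest subcategory of posets and monotone maps closed under cartesian products (unit $[0]=\{0\}$) containing $\delta_\pm:[0]\to[1]=\{0<1\}$; a precubical set is a functor $\square^{op}\to\mathbf{Set}$; $\square[n]=\square(-,[1]^n)$; for a precubical set $X$, $\mathrm{sk}_k(X)$ is the smallest sub-precubical set $A\subseteq X$ with $A_k=X_k$. $\vec\square[1]$ is $[0,1]$ with circulation $x\leqslant_V y$ iff $x\le y$ and $[x,y]\subset V$, $\vec\square[n]$ is its $n$-fold product in streams, and the stream realization of $X$ is the coend $\vec{|X|}=\int^{[1]^n}X_n\cdot\vec\square[n]$ in streams. Thus $\vec{|\square[n]|}=\vec\square[n]$ (underlying space $\mathbb{I}^n$), $\vec{|\mathrm{sk}_0(\square[n])|}$ is the set of vertices $\{0,1\}^n$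 and $\vec{|\mathrm{sk}_1(\square[n])|}$ is the union of the edges of the cube, as streams. *)

(* Defs.v *)
From Stdlib Require Import Reals Lra Relations.
From mathcomp Require Import all_boot.

Set Implicit Arguments.
Unset Strict Implicit.
Unset Printing Implicit Defensive.

(* A stream: a carrier, a family of open sets, and a circulation
   (a relation <=_V for every subset V; only open V matter). *)
Record Stream := {
  st_pt   : Type;
  st_open : (st_pt -> Prop) -> Prop;
  st_circ : (st_pt -> Prop) -> st_pt -> st_pt -> Prop
}.
Arguments st_open : clear implicits.
Arguments st_circ : clear implicits.

Definition bigU (X : Type) (O : (X -> Prop) -> Prop) : X -> Prop :=
  fun x => exists U, O U /\ U x.

Definition is_topology (S : Stream) : Prop :=
  st_open S (fun _ => True) /\
  (forall U V, st_open S U -> st_open S V -> st_open S (fun x => U x /\ V x)) /\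
  (forall O : (st_pt S -> Prop) -> Prop,
      (forall U, O U -> st_open S U) -> st_open S (bigU O)).

Definition gen_preorder (X : Type) (W : X -> Prop) (R : X -> X -> Prop) :
  X -> X -> Prop :=
  fun x y => W x /\ W y /\ clos_refl_trans X R x y.

Definition is_circulation (S : Stream) : Prop :=
  forall O : (st_pt S -> Prop) -> Prop,
    (forall U, O U -> st_open S U) ->
    forall x y,
      st_circ S (bigU O) x y <->
      gen_preorder (bigU O)
        (fun a b => exists V, O V /\ st_circ S V a b) x y.

Definition is_stream (S : Stream) : Prop := is_topology S /\ is_circulation S.

Definition continuous (S T : Stream) (f : st_pt S -> st_pt T) : Prop :=
  forall V, st_open T V -> st_open S (fun x => V (f x)).

Definition stream_map (S T : Stream) (f : st_pt S -> st_pt T) : Prop :=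
  continuous f /\
  forall V, st_open T V -> forall x y,
    st_circ S (fun z => V (f z)) x y -> st_circ T V (f x) (f y).

Definition st_le (S : Stream) : st_pt S -> st_pt S -> Prop :=
  st_circ S (fun _ => True).

Definition Ipt : Type := {x : R | Rle 0 x /\ Rle x 1}.

Definition Iopen (U : Ipt -> Prop) : Prop :=
  forall x, U x -> exists eps : R, Rlt 0 eps /\
    forall y : Ipt, Rlt (Rabs (Rminus (proj1_sig y) (proj1_sig x))) eps -> U y.

Definition Icirc (V : Ipt -> Prop) (x y : Ipt) : Prop :=
  Rle (proj1_sig x) (proj1_sig y) /\
  forall z : Ipt, Rle (proj1_sig x) (proj1_sig z) /\ Rle (proj1_sig z) (proj1_sig y) -> V z.

Definition Istream : Stream := {| st_pt := Ipt; st_open := Iopen; st_circ := Icirc |}.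

Lemma I0_prf : Rle 0 0 /\ Rle 0 1. Proof. lra. Qed.
Lemma I1_prf : Rle 0 1 /\ Rle 1 1. Proof. lra. Qed.
Definition I0 : Ipt := exist _ R0 I0_prf.
Definition I1 : Ipt := exist _ R1 I1_prf.
Definition Ib (b : bool) : Ipt := if b then I1 else I0.

Definition is_product (m : nat) (P : Stream) (p : 'I_m -> st_pt P -> Ipt) : Prop :=
  is_stream P /\
  (forall i, @stream_map P Istream (p i)) /\
  forall (S : Stream), is_stream S ->
  forall g : 'I_m -> st_pt S -> Ipt, (forall i, @stream_map S Istream (g i)) ->
  exists h : st_pt S -> st_pt P,
    stream_map h /\ (forall i z, p i (h z) = g i z) /\
    forall h' : st_pt S -> st_pt P,
      stream_map h' -> (forall i z, p i (h' z) = g i z) -> forall z, h' z = h z.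

(* The box category.  A morphism [1]^m -> [1]^n is encoded by the      *)
(* function f : 'I_n -> bool + 'I_m telling, for each output coordinate, *)
(* whether it is constant (inl b) or a copy of input coordinate (inr i); *)
(* the copied coordinates form an order preserving bijection.  These    *)
(* are exactly the composites of cartesian products of id, delta_-,    *)
(* delta_+.                                                             *)

Definition is_box (m n : nat) (f : 'I_n -> bool + 'I_m) : Prop :=
  (forall i : 'I_m, exists j, f j = inr i) /\
  (forall (j j' : 'I_n) (i i' : 'I_m),
      f j = inr i -> f j' = inr i' -> (j < j')%N -> (i < i')%N).

Definition box_comp (m' m n : nat) (f : 'I_n -> bool + 'I_m)
  (g : 'I_m -> bool + 'I_m') : 'I_n -> bool + 'I_m' :=
  fun j => match f j with inl b => inl b | inr i => g i end.

Unset Implicit Arguments.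
Section Realization.
Variables (cube : nat -> Stream) (proj : forall m, 'I_m -> st_pt (cube m) -> Ipt).

Definition realizes (m' m : nat) (g : 'I_m -> bool + 'I_m')
  (h : st_pt (cube m') -> st_pt (cube m)) : Prop :=
  stream_map h /\
  forall (i : 'I_m) z,
    proj m i (h z) = match g i with inl b => Ib b | inr i' => proj m' i' z end.

(* cocone over the cells of sk_k(square[n]) (cells [1]^m -> [1]^n with m <= k) *)
Definition is_cocone (n k : nat) (S : Stream)
  (c : forall m, ('I_n -> bool + 'I_m) -> st_pt (cube m) -> st_pt S) : Prop :=
  (forall m f, (m <= k)%N -> is_box f -> stream_map (c m f)) /\
  (forall m m' (f : 'I_n -> bool + 'I_m) (g : 'I_m -> bool + 'I_m') h,
      (m <= k)%N -> (m' <= k)%N -> is_box f -> is_box g -> realizes m' m g h ->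
      forall z, c m' (box_comp f g) z = c m f (h z)).


(* (K, iota) is the stream realization of sk_k(square[n]), i.e. the coend
   int^{[1]^m} sk_k(square[n])_m . ->square[m] computed in streams *)
Definition is_realization_skel (n k : nat) (K : Stream)
  (iota : forall m, ('I_n -> bool + 'I_m) -> st_pt (cube m) -> st_pt K) : Prop :=
  is_stream K /\ is_cocone n k K iota /\
  forall S, is_stream S ->
  forall c, is_cocone n k S c ->
  exists u : st_pt K -> st_pt S,
    stream_map u /\
    (forall m f, (m <= k)%N -> is_box f -> forall z, u (iota m f z) = c m f z) /\
    forall u' : st_pt K -> st_pt S, stream_map u' ->
      (forall m f, (m <= k)%N -> is_box f -> forall z, u' (iota m f z) = c m f z) ->
      forall x, u' x = u x.

End Realization.

(* Main.v *)
Require Import Defs.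
From Stdlib Require Import Reals Relations Lra Classical FunctionalExtensionality PropExtensionality.
From mathcomp Require Import all_boot.
Set Implicit Arguments.
Unset Strict Implicit.

Lemma pred_ext (X:Type) (U V : X -> Prop) : (forall x, U x <-> V x) -> U = V.
Proof. intro H; apply functional_extensionality; intro x; apply propositional_extensionality; apply H. Qed.

Lemma rel_ext (X:Type) (R1 R2 : X -> X -> Prop) : (forall x y, R1 x y <-> R2 x y) -> R1 = R2.
Proof. intro H; apply functional_extensionality; intro x; apply functional_extensionality; intro y;
  apply propositional_extensionality; apply H. Qed.

Lemma circ_iff (S : Stream) (U : st_pt S -> Prop) : is_stream S -> st_open S U ->
  forall x y, st_circ S U x y <-> gen_preorder U (st_circ S U) x y.
Proof.
intros [_ HC] hU x y.
assert (HO : forall W, (fun W : st_pt S -> Prop => W = U) W -> st_open S W) by (intros W e; simpl in e; subst; exact hU).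
assert (EU : Defs.bigU (fun W : st_pt S -> Prop => W = U) = U).
{ apply pred_ext; intro z; split.
  - intros [W [e Wz]]; subst; exact Wz.
  - intro Uz; exists U; split; auto. }
assert (ER : (fun a b => exists V, (fun W : st_pt S -> Prop => W = U) V /\ st_circ S V a b) = st_circ S U).
{ apply rel_ext; intros a b; split.
  - intros [V [e h]]; simpl in e; subst; exact h.
  - intro h; exists U; split; auto. }
pose proof (HC _ HO x y) as H. rewrite EU ER in H. exact H.
Qed.

Lemma circ_sub (S : Stream) U x y : is_stream S -> st_open S U -> st_circ S U x y -> U x /\ U y.
Proof. intros hS hU h. apply (circ_iff hS hU) in h. destruct h as [a [b _]]; auto. Qed.

Lemma circ_refl (S : Stream) U x : is_stream S -> st_open S U -> U x -> st_circ S U x x.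
Proof. intros hS hU h. apply (circ_iff hS hU). split; [exact h|split;[exact h|apply rt_refl]]. Qed.

Lemma full_open (S : Stream) : is_stream S -> st_open S (fun _ => True).
Proof. intros [[h _] _]; exact h. Qed.

Lemma le_trans (S : Stream) x y z : is_stream S -> st_le x y -> st_le y z -> @st_le S x z.
Proof. intros hS h1 h2. unfold st_le in *. apply (circ_iff hS (full_open hS)).
split; [exact I|split;[exact I|]]. eapply rt_trans; apply rt_step; eassumption. Qed.

Lemma le_refl (S : Stream) x : is_stream S -> @st_le S x x.
Proof. intros hS. apply circ_refl; auto. apply full_open; auto. Qed.

Lemma map_le (S T : Stream) (f : st_pt S -> st_pt T) x y : is_stream T -> stream_map f ->
  st_le x y -> st_le (f x) (f y).
Proof. intros hT [_ hf] h. apply (hf _ (full_open hT)). exact h. Qed.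

Lemma open_ext (S : Stream) (U V : st_pt S -> Prop) : (forall x, U x <-> V x) -> st_open S U -> st_open S V.
Proof. intros h; rewrite (pred_ext h); auto. Qed.

Lemma open_full (S : Stream) U : is_stream S -> (forall x, U x) -> st_open S U.
Proof. intros hS h. apply (open_ext (U := fun _ => True)). { intro; split; auto. } apply full_open; auto. Qed.

Lemma open_empty (S : Stream) U : is_stream S -> (forall x, ~ U x) -> st_open S U.
Proof. intros [[_ [_ hU]] _] h. apply (open_ext (U := Defs.bigU (fun _ => False))).
{ intro x; split. - intros [W [f _]]; contradiction. - intro u; exfalso; exact (h x u). }
apply hU. intros ? f; contradiction. Qed.

Lemma const_map (S T : Stream) (t : st_pt T) : is_stream S -> is_stream T ->
  stream_map (fun _ : st_pt S => t).
Proof.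
intros hS hT.
assert (hc : continuous (fun _ : st_pt S => t)).
{ intros V hV. destruct (classic (V t)) as [v|v].
  - apply open_full; auto.
  - apply open_empty; auto. }
split; [exact hc|]. intros V hV x y h.
destruct (circ_sub hS (hc V hV) h) as [v _]. apply circ_refl; auto.
Qed.

Section IS.
Local Open Scope R_scope.

Lemma Iopen_val (V : Ipt -> Prop) a b : Iopen V -> V a -> proj1_sig b = proj1_sig a -> V b.
Proof. intros hV Va e. destruct (hV a Va) as [eps [he h]]. apply h. rewrite e.
  unfold Rminus; rewrite Rplus_opp_r Rabs_R0; exact he. Qed.

Lemma Istream_top : is_topology Istream.
Proof.
split; [|split].
- intros x _. exists 1; split; [lra|auto].
- intros U V hU hV x [Ux Vx]. destruct (hU x Ux) as [e1 [h1 k1]]. destruct (hV x Vx) as [e2 [h2 k2]].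
  exists (Rmin e1 e2). split. { apply Rmin_glb_lt; auto. }
  intros y hy. split; [apply k1|apply k2]; eapply Rlt_le_trans; eauto; [apply Rmin_l|apply Rmin_r].
- intros O hO x [U [OU Ux]]. destruct (hO U OU x Ux) as [e [he k]]. exists e; split; auto.
  intros y hy. exists U; split; auto.
Qed.

Lemma Istream_circ : is_circulation Istream.
Proof.
intros O hO x y. simpl. set W := Defs.bigU O.
set Rr := (fun a b : Ipt => exists V, O V /\ Icirc V a b).
split.
- intros [hxy hin].
  assert (Wx : W x) by (apply hin; lra). assert (Wy : W y) by (apply hin; lra).
  split; [exact Wx|split;[exact Wy|]].
  set A := fun t : R => proj1_sig x <= t <= proj1_sig y /\
                     forall z : Ipt, proj1_sig z = t -> clos_refl_trans Ipt Rr x z.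
  assert (Ax : A (proj1_sig x)).
  { split; [lra|]. intros z ez. apply rt_step. destruct Wx as [V [OV Vx]].
    exists V; split; auto. split; [lra|]. intros w hw. apply (Iopen_val (hO V OV) Vx). lra. }
  assert (bA : bound A). { exists (proj1_sig y). intros t [ht _]; lra. }
  destruct (completeness A bA (ex_intro _ _ Ax)) as [s [hub hlub]].
  assert (sx : proj1_sig x <= s) by (apply hub; exact Ax).
  assert (sy : s <= proj1_sig y) by (apply hlub; intros t [ht _]; lra).
  assert (ps : 0 <= s <= 1) by (destruct x as [xv xp], y as [yv yp]; simpl in *; lra).
  set zs := exist (fun t => 0 <= t <= 1) s ps.
  assert (Wzs : W zs) by (apply hin; simpl; lra).
  destruct Wzs as [V [OV Vs]]. destruct (hO V OV zs Vs) as [eps [he heps]].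
  destruct (classic (exists t, A t /\ s - eps < t)) as [[t [At ht]]|nt].
  2:{ exfalso. assert (s <= s - eps); [|lra]. apply hlub. intros t At.
      destruct (Rle_dec t (s - eps)) as [l|l]; auto. exfalso; apply nt; exists t; split; auto. lra. }
  assert (ts : t <= s) by (apply hub; exact At).
  set t' := Rmin (s + eps/2) (proj1_sig y).
  assert (ht'1 : t' <= s + eps/2) by apply Rmin_l.
  assert (ht'2 : t' <= proj1_sig y) by apply Rmin_r.
  assert (ht'3 : t' = s + eps/2 \/ t' = proj1_sig y).
  { unfold t', Rmin; destruct Rle_dec; auto. }
  assert (At' : A t').
  { destruct At as [[tx ty] Ct]. split; [split|].
    - destruct ht'3 as [e|e]; rewrite e; lra.
    - exact ht'2.
    - intros z ez.
      assert (pt : 0 <= t <= 1) by (destruct x as [xv xp], y as [yv yp]; simpl in *; lra).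
      apply rt_trans with (exist (fun t => 0 <= t <= 1) t pt).
      + apply Ct; reflexivity.
      + apply rt_step. exists V; split; auto. simpl. split.
        * rewrite ez. simpl. destruct ht'3 as [e|e]; rewrite e; lra.
        * intros w [hw1 hw2]. apply heps. simpl in *. apply Rabs_def1; lra. }
  assert (t' <= s) by (apply hub; exact At').
  assert (ey : t' = proj1_sig y) by (destruct ht'3 as [e|e]; [lra|exact e]).
  destruct At' as [_ C]. apply C. symmetry; exact ey.
- intros [Wx [Wy hc]].
  assert (G : forall a b, clos_refl_trans Ipt Rr a b -> W a -> Icirc W a b).
  { intros a b hab. induction hab as [a b [V [OV [hab hin]]]|a|a b c _ IH1 _ IH2].
    - intros _. split; auto. intros z hz. exists V; split; auto.
    - intros Wa. split; [lra|]. intros z hz. destruct Wa as [V [OV Va]].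
      exists V; split; auto. apply (Iopen_val (hO V OV) Va). lra.
    - intros Wa. destruct (IH1 Wa) as [l1 h1].
      assert (Wb : W b) by (apply h1; lra).
      destruct (IH2 Wb) as [l2 h2]. split; [lra|].
      intros z hz. destruct (Rle_dec (proj1_sig z) (proj1_sig b)).
      + apply h1; lra.
      + apply h2; lra. }
  apply G; auto.
Qed.

Lemma Istream_stream : is_stream Istream.
Proof. split; [exact Istream_top|exact Istream_circ]. Qed.

End IS.

Definition Sdet (n : nat) : Stream :=
  {| st_pt := 'I_n -> Ipt;
     st_open := fun U => (forall x, U x) \/ (forall x, ~ U x);
     st_circ := fun V x y => V x /\ V y /\ forall j, Rle (proj1_sig (x j)) (proj1_sig (y j)) |}.

Lemma Sdet_stream n : is_stream (Sdet n).
Proof.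
split; [split; [|split]|].
- left; auto.
- intros U V [hU|hU] [hV|hV]; simpl.
  + left; auto.
  + right; intros x [_ v]; exact (hV x v).
  + right; intros x [u _]; exact (hU x u).
  + right; intros x [u _]; exact (hU x u).
- intros O hO. destruct (classic (exists U, O U /\ forall x, U x)) as [[U [OU hU]]|nU].
  + left. intro x; exists U; split; auto.
  + right. intros x [U [OU Ux]]. destruct (hO U OU) as [h|h].
    * apply nU; exists U; split; auto.
    * exact (h x Ux).
- intros O hO x y. simpl. split.
  + intros [Wx [Wy l]]. split; [exact Wx|split;[exact Wy|]]. apply rt_step.
    destruct Wx as [U [OU Ux]]. exists U; split; auto.
    destruct (hO U OU) as [h|h]; [|exfalso; exact (h x Ux)].
    split; auto.
  + intros [Wx [Wy h]]. split; [exact Wx|split;[exact Wy|]].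
    clear Wx Wy.
    induction h as [a b [V [_ [_ [_ l]]]]|a|a b c _ IH1 _ IH2].
    * exact l.
    * intro j; apply Rle_refl.
    * intro j; eapply Rle_trans; [apply IH1|apply IH2].
Qed.

Definition vert (n : nat) (b : 'I_n -> bool) : 'I_n -> bool + 'I_0 := fun j => inl (b j).

Lemma vert_box n (b : 'I_n -> bool) : is_box (vert b).
Proof. split.
- intros [i hi]; exfalso; inversion hi.
- intros j j' i i' e; discriminate e.
Qed.

Lemma vert_eq n (v : 'I_n -> bool + 'I_0) :
  v = vert (fun j => match v j with inl b => b | inr _ => false end).
Proof. apply functional_extensionality; intro j; unfold vert. destruct (v j) as [b|[i hi]]; auto.
  inversion hi. Qed.

Unset Implicit Arguments.
Arguments vert {n}.
Section Main.
Variables (cube : nat -> Stream) (proj : forall m, 'I_m -> st_pt (cube m) -> Ipt).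
Hypothesis Hp : forall m, is_product (proj m).

Lemma cube_stream m : is_stream (cube m).
Proof. exact (proj1 (Hp m)). Qed.

Lemma proj_map m i : @stream_map (cube m) Istream (proj m i).
Proof. exact (proj1 (proj2 (Hp m)) i). Qed.

Definition cdet n m (f : 'I_n -> bool + 'I_m) (z : st_pt (cube m)) : st_pt (Sdet n) :=
  fun j => match f j with inl b => Ib b | inr i => proj m i z end.

Lemma cdet_map n m f : stream_map (cdet n m f).
Proof.
assert (hc : continuous (cdet n m f)).
{ intros V [hV|hV].
  - apply open_full; [apply cube_stream|]. intro; apply hV.
  - apply open_empty; [apply cube_stream|]. intro; apply hV. }
split; [exact hc|]. intros V hV x y h.
destruct (circ_sub (cube_stream m) (hc V hV) h) as [vx vy].
simpl. split; [exact vx|split;[exact vy|]].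
assert (hfull : forall w, V w).
{ destruct hV as [hV|hV]; [exact hV|exfalso; exact (hV _ vx)]. }
assert (E : (fun z => V (cdet n m f z)) = (fun _ => True)) by (apply pred_ext; intro; split; auto).
rewrite E in h. intro j. unfold cdet. destruct (f j) as [b|i].
- apply Rle_refl.
- pose proof (map_le Istream_stream (proj_map m i) h) as H. destruct H as [H _]. exact H.
Qed.

Lemma cdet_cocone n k : is_cocone cube proj n k (Sdet n) (cdet n).
Proof.
split.
- intros m f _ _. apply cdet_map.
- intros m m' f g h _ _ _ _ [_ hr] z. apply functional_extensionality; intro j.
  unfold cdet, box_comp. destruct (f j) as [b|i]; auto.
  all: try (rewrite hr; reflexivity).
Qed.

Lemma detect n k K iota (b c : 'I_n -> bool) p q :
  is_realization_skel cube proj n k K iota ->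
  st_le (iota 0 (vert b) p) (iota 0 (vert c) q) -> forall j, b j = true -> c j = true.
Proof.
intros [hK [_ hU]] hle j bj.
destruct (hU (Sdet n) (Sdet_stream n) _ (cdet_cocone n k)) as [u [hu [hcomp _]]].
pose proof (map_le (Sdet_stream n) hu hle) as H.
rewrite !hcomp in H; try apply vert_box; try apply leq0n.
destruct H as [_ [_ H]]. specialize (H j). unfold cdet, vert in H. rewrite bj in H.
destruct (c j); auto. simpl in H. exfalso; lra.
Qed.


Lemma cube0_unique (p q : st_pt (cube 0)) : p = q.
Proof.
destruct (Hp 0) as [h0 [hpm hU]].
destruct (hU (cube 0) h0 (proj 0) hpm) as [h [_ [_ huniq]]].
assert (E1 : forall z, (fun _ : st_pt (cube 0) => p) z = h z).
{ apply huniq; [apply const_map; auto|]. intros [i hi]; inversion hi. }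
assert (E2 : forall z, (fun _ : st_pt (cube 0) => q) z = h z).
{ apply huniq; [apply const_map; auto|]. intros [i hi]; inversion hi. }
rewrite (E1 p) -(E2 p). reflexivity.
Qed.

Lemma cube1_pts : exists e : bool -> st_pt (cube 1),
  (forall x i, proj 1 i (e x) = Ib x) /\ st_le (e false) (e true).
Proof.
destruct (Hp 1) as [h1 [hpm hU]].
destruct (hU Istream Istream_stream (fun _ z => z)) as [h [hh [hp _]]].
{ intro i. split; [intros V hV; exact hV|]. intros V hV x y hc; exact hc. }
exists (fun x => h (Ib x)). split.
- intros x i. rewrite hp. reflexivity.
- apply (map_le h1 hh). simpl. unfold st_le; simpl. split; [simpl; lra|]. auto.
Qed.

Definition setb {n} (b : 'I_n -> bool) (j0 : 'I_n) (x : bool) : 'I_n -> bool :=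
  fun j => if j == j0 then x else b j.

Lemma edge n k K iota (b : 'I_n -> bool) (j0 : 'I_n) p :
  is_realization_skel cube proj n k K iota -> (0 < k)%N ->
  st_le (iota 0 (vert (setb b j0 false)) p) (iota 0 (vert (setb b j0 true)) p).
Proof.
intros [hK [[hmap hcomp] _]] hk.
destruct cube1_pts as [e [he hle]].
set f : 'I_n -> bool + 'I_1 := fun j => if j == j0 then inr ord0 else inl (b j).
assert (hf : is_box f).
{ split.
  - intro i. exists j0. unfold f. rewrite eqxx. rewrite (ord1 i). reflexivity.
  - intros j j' i i'. unfold f.
    case: (eqVneq j j0) => [-> |hj]; case: (eqVneq j' j0) => [-> |hj'] //. by rewrite ltnn. }
assert (key : forall x, iota 0 (vert (setb b j0 x)) p = iota 1 f (e x)).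
{ intro x.
  set g : 'I_1 -> bool + 'I_0 := fun _ => inl x.
  assert (hg : is_box g). { split; [intros [i hi]; inversion hi|intros ? ? ? ? h; discriminate h]. }
  assert (E : box_comp f g = vert (setb b j0 x)).
  { apply functional_extensionality; intro j. unfold box_comp, f, vert, setb.
    case: (j == j0); reflexivity. }
  rewrite -E. apply (hcomp 1 0 f g (fun _ => e x)); auto.
  split; [apply const_map; apply cube_stream|]. intros i z. apply he. }
rewrite !key. apply (map_le hK); [|exact hle]. apply hmap; auto.
Qed.

Lemma chain n k K iota (b c : 'I_n -> bool) p q :
  is_realization_skel cube proj n k K iota -> ((0 < n)%N -> (0 < k)%N) ->
  (forall j, b j = true -> c j = true) ->
  st_le (iota 0 (vert b) p) (iota 0 (vert c) q).
Proof.
intros hR hnk hbc. rewrite (cube0_unique q p).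
destruct hR as [hK hrest].
set d := fun t : nat => fun j : 'I_n => if (j < t)%N then c j else b j.
assert (H : forall t, st_le (iota 0 (vert b) p) (iota 0 (vert (d t)) p)).
{ elim=> [|t IH].
  - assert (E : d 0 = b) by (apply functional_extensionality; intro j; reflexivity).
    rewrite E. apply le_refl; auto.
  - case: (ltnP t n) => ht.
    + set j0 := Ordinal ht.
      case: (eqVneq (b j0) (c j0)) => hb.
      * assert (E : d t.+1 = d t).
        { apply functional_extensionality; intro j. unfold d.
          rewrite ltnS leq_eqVlt. case: (eqVneq (nat_of_ord j) t) => hj /=.
          - have -> : j = j0 by apply/val_inj. rewrite ltnn. by rewrite hb.
          - by []. }
        rewrite E; exact IH.
      * assert (b0 : b j0 = false).
        { case hbj : (b j0) => //. by rewrite hbj (hbc _ hbj) in hb. }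
        assert (c1 : c j0 = true) by (move: hb; rewrite b0; by case: (c j0)).
        assert (E1 : d t = setb (d t) j0 false).
        { apply functional_extensionality; intro j. unfold setb.
          case: (eqVneq j j0) => [->|] //. unfold d. by rewrite /= ltnn. }
        assert (E2 : d t.+1 = setb (d t) j0 true).
        { apply functional_extensionality; intro j. unfold setb, d.
          case: (eqVneq j j0) => [->|hj]; first by rewrite /= ltnSn.
          rewrite ltnS leq_eqVlt. have hj' : (nat_of_ord j == t) = false.
          { apply/negbTE. apply/eqP => e'. apply: (negP hj). apply/eqP. by apply/val_inj. }
          by rewrite hj'. }
        apply (le_trans hK IH). rewrite E1 E2. apply (edge _ _ _ _ _ _ _ (conj hK hrest)).
        apply hnk. apply: (leq_ltn_trans (leq0n t) ht).
    + assert (E : d t.+1 = d t).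
      { apply functional_extensionality; intro j. unfold d.
        have h1 : (j < t)%N by apply: (leq_trans (ltn_ord j) ht).
        by rewrite ltnS (ltnW h1) h1. }
      rewrite E; exact IH. }
assert (E : d n = c).
{ apply functional_extensionality; intro j. unfold d. by rewrite ltn_ord. }
rewrite -E. apply H.
Qed.

End Main.

Theorem mainTheorem8 (n : nat)
  (cube : nat -> Stream) (proj : forall m, 'I_m -> st_pt (cube m) -> Ipt)
  (Kn K1 : Stream)
  (iotan : forall m, ('I_n -> bool + 'I_m) -> st_pt (cube m) -> st_pt Kn)
  (iota1 : forall m, ('I_n -> bool + 'I_m) -> st_pt (cube m) -> st_pt K1) :
  (forall m, is_product (proj m)) ->
  is_realization_skel cube proj n n Kn iotan ->
  is_realization_skel cube proj n 1 K1 iota1 ->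
  forall (v w : 'I_n -> bool + 'I_0) (p q : st_pt (cube 0)),
    is_box v -> is_box w ->
    (st_le (iotan 0 v p) (iotan 0 w q) <-> st_le (iota1 0 v p) (iota1 0 w q)).
Proof.
intros Hp hn h1 v w p q _ _.
rewrite (vert_eq v) (vert_eq w).
split; intro H.
- apply (chain cube proj Hp n 1 K1 iota1 _ _ p q h1 (fun _ => isT)).
  exact (detect cube proj Hp n n Kn iotan _ _ p q hn H).
- apply (chain cube proj Hp n n Kn iotan _ _ p q hn (fun h => h)).
  exact (detect cube proj Hp n 1 K1 iota1 _ _ p q h1 H).
Qed.
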